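(* Let $\Gamma=(V,E,\varphi)$ be an oriented hypergraph with adjacency matrix $A\neq \mathbf 0$, strong coloring number $\chi(\Gamma)$, and smallest and largest normalized Laplacian eigenvalues $\lambda_1$ and $\lambda_N$. Then $\lambda_1<1<\lambda_N$ and \[ \chi(\Gamma)\;\geq\;\frac{\lambda_N-\lambda_1}{\min\{\lambda_N-1,\;1-\lambda_1\}} . \] (If instead $A=\mathbf 0$, then $\lambda_1=\lambda_N=1$, the right-hand side is interpreted as $1$ by convention, and the inequality is trivial.)
   Context: An oriented hypergraph $\Gamma=(V,E,\varphi)$ consists of a finite vertex set $V$ with $|V|=N$, an edge set $E\subseteq\mathcal P(V)$, and a function $\varphi\colon V\times E\to\{-1,0,1\}$ with $\varphi(v,e)\neq 0$ iff $v\in e$. Two vertices $v,w\in e$ are co-oriented in $e$ if $\varphi(v,e)=\varphi(w,e)$ and anti-oriented in $e$ if $\varphi(v,e)=-\varphi(w,e)$. The degree is $\deg v=|\{e\in E: v\in e\}|$; we assume every vertex has degree at least $1$, and $D=\mathrm{diag}(\deg v)_{v\in V}$. The adjacency matrix $A$ is the $N\times N$ matrix with $A_{v,v}=0$ and, for $v\neq w$, $A_{v,w}=(\#\text{edges in which } v,w \text{ are anti-oriented})-(\#\text{edges in which } v,w \text{ are co-oriented})$. The normalized Laplacian is $L=\mathrm{Id}-D^{-1}A$ (equivalently $D^{-1}\mathcal I\mathcal I^\top$ with incidence matrix $\mathcal I_{v,e}=\varphi(v,e)$); it is self-adjoint for $\langle f,g\rangle=\sum_{v}\deg v\, f(v)g(v)$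 on functions $V\to\mathbb R$, and its (real) eigenvalues are $\lambda_1\le\dots\le\lambda_N$. A proper strong $k$-coloring is a map $V\to\{1,\dots,k\}$ such that any two distinct vertices lying in a common edge receive different colors; $\chi(\Gamma)$ is the least $k$ for which one exists. *)

(* Defs.v *)
From HB Require Import structures.
From mathcomp Require Import all_boot all_order all_algebra.
Set Implicit Arguments. Unset Strict Implicit. Unset Printing Implicit Defensive.
Import Order.TTheory GRing.Theory Num.Theory.
Local Open Scope ring_scope.

Definition is_oriented_hypergraph (V : finType) (E : {set {set V}})
  (phi : V -> {set V} -> int) : Prop :=
  forall v e, e \in E -> (phi v e \in [:: -1; 0; 1]) && ((phi v e != 0) == (v \in e)).

Definition hdeg (V : finType) (E : {set {set V}}) (v : V) : nat :=
  #|[set e in E | v \in e]|.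

Definition n_anti (V : finType) (E : {set {set V}}) (phi : V -> {set V} -> int) (v w : V) : nat :=
  #|[set e in E | [&& v \in e, w \in e & phi v e == - phi w e]]|.
Definition n_co (V : finType) (E : {set {set V}}) (phi : V -> {set V} -> int) (v w : V) : nat :=
  #|[set e in E | [&& v \in e, w \in e & phi v e == phi w e]]|.

Definition adjM (R : numFieldType) (V : finType) (E : {set {set V}})
  (phi : V -> {set V} -> int) : 'M[R]_#|V| :=
  \matrix_(i, j) (if i == j then 0
                  else (n_anti E phi (enum_val i) (enum_val j))%:R
                       - (n_co E phi (enum_val i) (enum_val j))%:R).

Definition degM (R : numFieldType) (V : finType) (E : {set {set V}}) : 'M[R]_#|V| :=
  diag_mx (\row_i (hdeg E (enum_val i))%:R).

Definition nlap (R : numFieldType) (V : finType) (E : {set {set V}})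
  (phi : V -> {set V} -> int) : 'M[R]_#|V| :=
  1%:M - invmx (degM R E) *m adjM R E phi.

Definition strong_colorable (V : finType) (E : {set {set V}}) (k : nat) : bool :=
  [exists c : {ffun V -> 'I_k},
     [forall e in E, forall v in e, forall w in e, (v != w) ==> (c v != c w)]].

Lemma strong_colorable_card (V : finType) (E : {set {set V}}) :
  exists k, strong_colorable E k.
Proof.
exists #|V|; apply/existsP; exists [ffun v => enum_rank v].
apply/forallP => e; apply/implyP => _; apply/forallP => v; apply/implyP => _.
apply/forallP => w; apply/implyP => _; apply/implyP => hvw.
by rewrite !ffunE; apply: contra hvw => /eqP/enum_rank_inj ->.
Qed.

Definition chi (V : finType) (E : {set {set V}}) : nat :=
  ex_minn (strong_colorable_card E).

(* Main.v *)
Require Import Defs.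
From HB Require Import structures.
From mathcomp Require Import all_boot all_order all_algebra.
From mathcomp Require Import complex.
From mathcomp Require Import ring lra.
Set Implicit Arguments. Unset Strict Implicit. Unset Printing Implicit Defensive.
Import Order.TTheory GRing.Theory Num.Theory.
Local Open Scope ring_scope.

Module SpecM.
Import Num.Def.
Local Open Scope sesquilinear_scope.
Section Spec.
Variable R : rcfType.
Local Notation C := (R[i]).
Local Notation f := (real_complex R).

Lemma fmx_real m n (M : 'M[R]_(m,n)) : map_mx conjC (map_mx f M) = map_mx f M.
Proof. by apply/matrixP=> i j; rewrite !mxE conj_Creal //; apply/complex_realP; eexists. Qed.

Lemma rayleigh n (S : 'M[R]_n) (a b : R) : S^T = S ->
  (forall k, eigenvalue S k -> a <= k <= b) ->
  forall z : 'rV[R]_n, a * (z *m z^T) 0 0 <= (z *m S *m z^T) 0 0 <= b * (z *m z^T) 0 0.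
Proof.
move=> Ssym Heig z.
pose Sc := map_mx f S.
have Sh : Sc \is hermsymmx.
  apply/is_hermitianmxP; rewrite expr0 scale1r.
  apply/matrixP=> i j; rewrite !mxE conj_Creal; last by apply/complex_realP; eexists.
  by rewrite -[in LHS]Ssym mxE.
have /orthomx_spectralP HP := hermitian_normalmx Sh.
set P := spectralmx Sc in HP; set X := spectral_diag Sc in HP.
have Pu : P \in unitmx by apply: spectral_unit.
have PV : invmx P = P ^t* by apply: invmx_unitary; apply: spectral_unitarymx.
have Xr : X \is a realmx by apply: hermitian_spectral_diag_real.
have Xk : forall i, a <= complex.Re (X 0 i) <= b.
  move=> i; apply: Heig.
  have Xi : X 0 i = f (complex.Re (X 0 i)).
    by rewrite RRe_real //; move/mxOverP: Xr; apply.
  have : eigenvalue Sc (X 0 i).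
    apply/eigenvalueP; exists (row i P).
      rewrite HP rowE !mulmxA mulmxK //.
      rewrite scalemxAl; congr (_ *m P).
      apply/matrixP=> r j; rewrite mul_mx_diag !mxE (ord1 r).
      by case: (j =P i) => [->|]; rewrite ?mulr1 ?mulr0 ?mul0r ?mul1r.
    apply/eqP => /(congr1 (mulmx^~ (invmx P))).
    rewrite rowE mulmxK // mul0mx => /matrixP/(_ 0 i).
    by rewrite !mxE !eqxx /= => /eqP; rewrite oner_eq0.
  by rewrite Xi !eigenvalue_root_char -map_char_poly fmorph_root.
have Xi : forall i, X 0 i = f (complex.Re (X 0 i)).
  by move=> i; rewrite RRe_real //; move/mxOverP: Xr; apply.
pose zc := map_mx f z.
have zcT : zc^T = zc ^t* by rewrite /zc map_trmx fmx_real.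
have tmul : forall (p q r : nat) (A : 'M[C]_(p,q)) (B : 'M[C]_(q,r)), (A *m B)^t* = B^t* *m A^t*.
  by move=> p q r A B; rewrite trmx_mul map_mxM.
pose u := zc *m P^t*.
have Pu' : P *m zc^t* = u^t* by rewrite /u tmul trmxCK.
have PP : P^t* *m P = 1%:M by rewrite -PV mulVmx.
have E1 : f ((z *m S *m z^T) 0 0) = \sum_j X 0 j * (u 0 j * (u 0 j)^* ).
  have -> : f ((z *m S *m z^T) 0 0) = (map_mx f (z *m S *m z^T)) 0 0 by rewrite [in RHS]mxE.
  rewrite !map_mxM -map_trmx -/zc zcT -/Sc HP PV.
  rewrite !mulmxA -(mulmxA _ P) Pu' -/u mxE; apply: eq_bigr => j _.
  by rewrite mul_mx_diag !mxE mulrCA mulrA.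
have E2 : f ((z *m z^T) 0 0) = \sum_j (u 0 j * (u 0 j)^* ).
  have -> : f ((z *m z^T) 0 0) = (map_mx f (z *m z^T)) 0 0 by rewrite [in RHS]mxE.
  rewrite !map_mxM -map_trmx -/zc zcT -[zc in zc *m _]mulmx1 -PP.
  rewrite mulmxA -mulmxA Pu' mxE; apply: eq_bigr => j _.
  by rewrite !mxE.
apply/andP; split; rewrite -lecR rmorphM /= E1 E2 mulr_sumr; apply: ler_sum => j _.
  by rewrite [X 0 j]Xi ler_wpM2r ?mul_conjC_ge0 // lecR; case/andP: (Xk j).
by rewrite [X 0 j]Xi ler_wpM2r ?mul_conjC_ge0 // lecR; case/andP: (Xk j).
Qed.
End Spec.
End SpecM.
Import SpecM.

Section BF.
Variable R : realFieldType.
Variable n : nat.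
Implicit Types (M : 'M[R]_n) (y z : 'rV[R]_n).

Lemma mB p q (A B : 'M[R]_(p,q)) i j : (A - B) i j = A i j - B i j. Proof. by rewrite !mxE. Qed.
Lemma mD p q (A B : 'M[R]_(p,q)) i j : (A + B) i j = A i j + B i j. Proof. by rewrite !mxE. Qed.
Lemma mZ p q a (A : 'M[R]_(p,q)) i j : (a *: A) i j = a * A i j. Proof. by rewrite !mxE. Qed.
Lemma mN p q (A : 'M[R]_(p,q)) i j : (- A) i j = - A i j. Proof. by rewrite !mxE. Qed.
Lemma mT p q (A : 'M[R]_(p,q)) i j : A^T i j = A j i. Proof. by rewrite !mxE. Qed.

Definition bf M y z := (y *m M *m z^T) 0 0.

Lemma bfE M y z : bf M y z = \sum_b \sum_a y 0 a * M a b * z 0 b.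
Proof.
rewrite /bf mxE; apply: eq_bigr => b _; rewrite !mxE big_distrl /=.
by [].
Qed.

Lemma bfBl M y1 y2 z : bf M (y1 - y2) z = bf M y1 z - bf M y2 z.
Proof. by rewrite /bf !mulmxBl mB. Qed.
Lemma bfBr M y z1 z2 : bf M y (z1 - z2) = bf M y z1 - bf M y z2.
Proof. by rewrite /bf linearB /= mulmxBr mB. Qed.
Lemma bfDl M y1 y2 z : bf M (y1 + y2) z = bf M y1 z + bf M y2 z.
Proof. by rewrite /bf !mulmxDl mD. Qed.
Lemma bfDr M y z1 z2 : bf M y (z1 + z2) = bf M y z1 + bf M y z2.
Proof. by rewrite /bf linearD /= mulmxDr mD. Qed.
Lemma bfZl M a y z : bf M (a *: y) z = a * bf M y z.
Proof. by rewrite /bf -!scalemxAl mZ. Qed.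
Lemma bfZr M a y z : bf M y (a *: z) = a * bf M y z.
Proof. by rewrite /bf linearZ /= -scalemxAr mZ. Qed.
Lemma bfBM M1 M2 y z : bf (M1 - M2) y z = bf M1 y z - bf M2 y z.
Proof. by rewrite /bf mulmxBr mulmxBl mB. Qed.
Lemma bfZM a M y z : bf (a *: M) y z = a * bf M y z.
Proof. by rewrite /bf -scalemxAr -scalemxAl mZ. Qed.
Lemma bfNM M y z : bf (- M) y z = - bf M y z.
Proof. by rewrite /bf mulmxN mulNmx mN. Qed.
Lemma bf_suml k M (a : 'I_k -> 'rV[R]_n) z : bf M (\sum_i a i) z = \sum_i bf M (a i) z.
Proof. by rewrite /bf !mulmx_suml summxE. Qed.
Lemma bf_sumr k M (a : 'I_k -> 'rV[R]_n) y : bf M y (\sum_i a i) = \sum_i bf M y (a i).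
Proof. by rewrite /bf raddf_sum /= mulmx_sumr summxE. Qed.
Lemma bf_sym M y z : M^T = M -> bf M y z = bf M z y.
Proof.
move=> HM; rewrite /bf -[LHS](mT (y *m M *m z^T)).
by rewrite !trmx_mul trmxK HM mulmxA.
Qed.
Lemma bf_delta M i j : bf M (delta_mx 0 i) (delta_mx 0 j) = M i j.
Proof. by rewrite /bf trmx_delta -rowE -colE !mxE. Qed.

Lemma psd_sum k M (a : 'I_k -> 'rV[R]_n) : M^T = M -> (forall y, 0 <= bf M y y) ->
  bf M (\sum_i a i) (\sum_i a i) <= k%:R * \sum_i bf M (a i) (a i).
Proof.
move=> HM Hpsd.
have H0 : 0 <= \sum_i \sum_j bf M (a i - a j) (a i - a j).
  by apply: sumr_ge0 => i _; apply: sumr_ge0 => j _.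
have E : forall i j, bf M (a i - a j) (a i - a j) =
   bf M (a i) (a i) + bf M (a j) (a j) - 2%:R * bf M (a i) (a j).
  move=> i j; rewrite !bfBl !bfBr (bf_sym (a j) (a i) HM); ring.
have E2 : \sum_i \sum_j bf M (a i - a j) (a i - a j) =
  2%:R * (k%:R * \sum_i bf M (a i) (a i)) - 2%:R * bf M (\sum_i a i) (\sum_i a i).
  under eq_bigr do under eq_bigr do rewrite E.
  rewrite bf_suml; under [X in _ = _ - _ * X]eq_bigr do rewrite bf_sumr.
  under eq_bigr do rewrite sumrB big_split /=.
  rewrite sumrB big_split /=.
  have S1 : \sum_(i < k) \sum_(j < k) bf M (a i) (a i) = k%:R * \sum_i bf M (a i) (a i).
    by rewrite mulr_sumr; apply: eq_bigr => i _; rewrite sumr_const card_ord mulr_natl.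
  have S2 : \sum_(i < k) \sum_(j < k) bf M (a j) (a j) = k%:R * \sum_i bf M (a i) (a i).
    by rewrite sumr_const card_ord mulr_natl.
  have S3 : \sum_(i < k) \sum_(j < k) 2%:R * bf M (a i) (a j) = 2%:R * \sum_(i < k) \sum_(j < k) bf M (a i) (a j).
    by rewrite mulr_sumr; apply: eq_bigr => i _; rewrite mulr_sumr.
  rewrite S1 S2 S3; ring.
rewrite E2 in H0; lra.
Qed.

Lemma hoffman k (A : 'M[R]_n) (d : 'I_n -> R) (col : 'I_n -> 'I_k) (mu m : R) (w : 'rV[R]_n) :
  A^T = A -> (forall i j, col i = col j -> A i j = 0) -> (forall i, 0 < d i) ->
  (forall y, m * bf (diag_mx (\row_i d i)) y y <= bf A y y) ->
  w *m A = mu *: (w *m diag_mx (\row_i d i)) -> w != 0 -> mu - m <= k%:R * (- m).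
Proof.
move=> HA Hcol Hd Hm Hw Hw0.
set D := diag_mx _ in Hm Hw *.
have bfD : forall y, bf D y y = \sum_u d u * y 0 u ^+ 2.
  move=> y; rewrite bfE; apply: eq_bigr => b _; rewrite (bigD1 b) //= big1 ?addr0.
    by rewrite !mxE eqxx mulr1n expr2 mulrCA mulrA.
  by move=> c hc; rewrite !mxE (negbTE hc) mulr0n mulr0 mul0r.
have Dsym : D^T = D by rewrite tr_diag_mx.
pose P := A - m *: D.
have Psym : P^T = P by rewrite /P linearB linearZ /= HA Dsym.
have Ppsd : forall y, 0 <= bf P y y by move=> y; rewrite bfBM bfZM subr_ge0 Hm.
pose a j := \row_u (if col u == j then w 0 u else 0).
have wsum : w = \sum_j a j.
  apply/rowP => u; rewrite summxE (bigD1 (col u)) //= big1 ?addr0 => [|j hj];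
    rewrite !mxE ?eqxx //.
  by rewrite eq_sym (negbTE hj).
have hA : forall j, bf A (a j) (a j) = 0.
  move=> j; rewrite bfE big1 // => b _; rewrite big1 // => c _; rewrite !mxE.
  case: eqP => Hc; case: eqP => Hb; rewrite ?mul0r ?mulr0 //.
  by rewrite (Hcol c b) ?mulr0 ?mul0r // Hc Hb.
have hD : \sum_j bf D (a j) (a j) = bf D w w.
  rewrite bfD; under eq_bigr do rewrite bfD.
  rewrite exchange_big /=; apply: eq_bigr => u _.
  rewrite -mulr_sumr; congr (_ * _); rewrite (bigD1 (col u)) //= big1 ?addr0 => [|j hj];
    rewrite !mxE ?eqxx //.
  by rewrite eq_sym (negbTE hj) expr0n.
have hw : bf P w w = (mu - m) * bf D w w.
  by rewrite bfBM bfZM {1}/bf Hw -scalemxAl mZ -/(bf D w w) mulrBl.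
have pos : 0 < bf D w w.
  rewrite bfD; have [u hu] : exists u, w 0 u != 0.
    case: (pickP (fun u => w 0 u != 0)) => [u hu|h]; first by exists u.
    case/eqP: Hw0; apply/rowP=> u; rewrite mxE; move: (h u) => /negbFE/eqP //.
  rewrite (bigD1 u) //=.
  have h1 : 0 <= \sum_(i | i != u) d i * w 0 i ^+ 2.
    by apply: sumr_ge0 => i _; rewrite mulr_ge0 ?sqr_ge0 // ltW.
  have h2 : 0 < d u * w 0 u ^+ 2 by rewrite mulr_gt0 // lt0r sqr_ge0 andbT sqrf_eq0.
  lra.
have := psd_sum a Psym Ppsd; rewrite -wsum hw.
have -> : \sum_j bf P (a j) (a j) = - m * bf D w w.
  by rewrite -hD mulr_sumr; apply: eq_bigr => j _; rewrite bfBM bfZM hA mulNr sub0r.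
by rewrite mulrA ler_pM2r.
Qed.

Lemma test_vec (A : 'M[R]_n) i j s : A^T = A ->
  bf A (delta_mx 0 i + s *: delta_mx 0 j) (delta_mx 0 i + s *: delta_mx 0 j) =
  A i i + 2%:R * s * A i j + s ^+ 2 * A j j.
Proof.
move=> HA; rewrite !bfDl !bfDr !bfZl !bfZr !bf_delta.
have -> : A j i = A i j by rewrite -[in LHS]HA mxE.
rewrite expr2; ring.
Qed.
End BF.

Theorem mainTheorem1 (R : rcfType) (V : finType) (E : {set {set V}})
  (phi : V -> {set V} -> int)
  (Hphi : is_oriented_hypergraph E phi)
  (Hdeg : forall v : V, (0 < hdeg E v)%N)
  (HA : adjM R E phi != 0)
  (l1 lN : R)
  (Hl1 : eigenvalue (nlap R E phi) l1)
  (Hl1min : forall l, eigenvalue (nlap R E phi) l -> l1 <= l)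
  (HlN : eigenvalue (nlap R E phi) lN)
  (HlNmax : forall l, eigenvalue (nlap R E phi) l -> l <= lN) :
  l1 < 1 < lN /\
  (lN - l1) / Num.min (lN - 1) (1 - l1) <= (chi E)%:R.
Proof.
rewrite /chi; case: ex_minnP => k /existsP [c Hc] _.
set n := #|V|.
set A := adjM R E phi.
pose dd (i : 'I_n) : R := (hdeg E (enum_val i))%:R.
have hd : forall i, 0 < dd i by move=> i; rewrite ltr0n.
set D := degM R E.
have DE : D = diag_mx (\row_i dd i) by [].
have Asym : A^T = A.
  apply/matrixP => i j; rewrite !mxE eq_sym; case: eqP => // _.
  congr (_%:R - _%:R); apply: eq_card => e; rewrite !inE; case: (e \in E) => //=.
    rewrite andbA [X in X && _]andbC -andbA; congr (_ && (_ && _)).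
    by rewrite -eqr_oppLR eq_sym.
  by rewrite andbA [X in X && _]andbC -andbA eq_sym.
pose col (i : 'I_n) := c (enum_val i).
have Acol : forall i j, col i = col j -> A i j = 0.
  move=> i j hij; rewrite /A /adjM mxE; case: eqP => // hne.
  have emp : forall e, e \in E -> enum_val i \in e -> enum_val j \in e -> False.
    move=> e he hi hj.
    move/forallP: Hc => /(_ e); rewrite he /= => /forallP/(_ (enum_val i)).
    rewrite hi /= => /forallP/(_ (enum_val j)); rewrite hj /= => /implyP H.
    have hv : enum_val i != enum_val j by apply/eqP => /enum_val_inj.
    by move: (H hv); rewrite -/(col i) -/(col j) hij eqxx.
  have -> : n_anti E phi (enum_val i) (enum_val j) = 0%N.
    apply/eqP; rewrite cards_eq0; apply/eqP/setP => e; rewrite !inE.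
    by apply/negbTE/negP => /andP[he /and3P[hi hj _]]; exact: emp e he hi hj.
  have -> : n_co E phi (enum_val i) (enum_val j) = 0%N.
    apply/eqP; rewrite cards_eq0; apply/eqP/setP => e; rewrite !inE.
    by apply/negbTE/negP => /andP[he /and3P[hi hj _]]; exact: emp e he hi hj.
  by rewrite subrr.
pose Di := diag_mx (\row_i (dd i)^-1).
have DDi : D *m Di = 1%:M.
  rewrite DE mulmx_diag -diag_const_mx; congr diag_mx; apply/rowP => i.
  by rewrite !mxE mulfV // gt_eqF.
have Du : D \in unitmx by case: (mulmx1_unit DDi).
have invD : invmx D = Di by rewrite -[Di](mulKmx Du) DDi mulmx1.
have LE : nlap R E phi = Di *m (D - A).
  by rewrite /nlap -/D -/A invD mulmxBr -invD mulVmx.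
pose sq (i : 'I_n) := Num.sqrt (dd i).
have sq_gt0 : forall i, 0 < sq i by move=> i; rewrite sqrtr_gt0.
pose D12 := diag_mx (\row_i sq i).
pose Dm12 := diag_mx (\row_i (sq i)^-1).
have D12m : D12 *m Dm12 = 1%:M.
  rewrite mulmx_diag -diag_const_mx; congr diag_mx; apply/rowP => i.
  by rewrite !mxE mulfV // gt_eqF.
have Dm12m : Dm12 *m D12 = 1%:M by apply: mulmx1C.
have D1212 : D12 *m D12 = D.
  rewrite mulmx_diag DE; congr diag_mx; apply/rowP => i.
  by rewrite !mxE -expr2 sqr_sqrtr // ltW.
have Dim : Dm12 *m Dm12 = Di.
  rewrite mulmx_diag; congr diag_mx; apply/rowP => i.
  by rewrite !mxE -expr2 exprVn sqr_sqrtr // ltW.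
pose S := Dm12 *m (D - A) *m Dm12.
have DT : D^T = D by rewrite DE tr_diag_mx.
have Ssym : S^T = S.
  by rewrite /S !trmx_mul !tr_diag_mx linearB /= DT Asym mulmxA.
have LS : nlap R E phi = Dm12 *m S *m D12.
  by rewrite LE /S -!mulmxA Dm12m mulmx1 !mulmxA Dim.
have eigS : forall l, eigenvalue S l -> eigenvalue (nlap R E phi) l.
  move=> l /eigenvalueP [v hv v0]; apply/eigenvalueP; exists (v *m D12).
    rewrite LS !mulmxA -(mulmxA v) D12m mulmx1; move: hv; rewrite /S !mulmxA => ->; by rewrite scalemxAl.
  apply: contra v0 => /eqP h; apply/eqP.
  by rewrite -[v]mulmx1 -D12m mulmxA h mul0mx.
have ray : forall y : 'rV[R]_n, l1 * bf D y y <= bf (D - A) y y <= lN * bf D y y.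
  move=> y.
  have := rayleigh Ssym (fun l hl => ltac:(apply/andP; split; [apply: Hl1min | apply: HlNmax]; exact: eigS)) (y *m D12).
  have -> : (y *m D12 *m S *m (y *m D12)^T) 0 0 = bf (D - A) y y.
    by rewrite /bf /S trmx_mul tr_diag_mx !mulmxA -(mulmxA y) D12m mulmx1 -(mulmxA _ Dm12) Dm12m mulmx1.
  have -> : (y *m D12 *m (y *m D12)^T) 0 0 = bf D y y.
    by rewrite /bf trmx_mul tr_diag_mx mulmxA -(mulmxA y) D1212.
  by [].
have eigw : forall l, eigenvalue (nlap R E phi) l ->
    exists2 w : 'rV_n, w *m A = (1 - l) *: (w *m D) & w != 0.
  move=> l /eigenvalueP [v hv v0]; exists (v *m Di).
    have hwD : v *m Di *m D = v by rewrite -mulmxA (mulmx1C DDi) mulmx1.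
    move: hv; rewrite LE mulmxA mulmxBr hwD => hv.
    rewrite scalerBl scale1r -hv.
    by rewrite opprB addrC subrK.
  apply: contra v0 => /eqP h; apply/eqP.
  by rewrite -[v]mulmx1 -(mulmx1C DDi) mulmxA h mul0mx.
have [w1 hw1 w10] := eigw _ Hl1.
have [wN hwN wN0] := eigw _ HlN.
have H1 : (1 - l1) - (1 - lN) <= k%:R * (- (1 - lN)).
  apply: (hoffman Asym Acol hd _ hw1 w10) => y.
  have := ray y; rewrite bfBM -DE => /andP[_ h]; lra.
have H2 : (lN - 1) - (l1 - 1) <= k%:R * (- (l1 - 1)).
  have AsymN : (- A)^T = - A by rewrite linearN /= Asym.
  have AcolN : forall i j, col i = col j -> (- A) i j = 0.
    by move=> i j h; rewrite mN Acol // oppr0.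
  apply: (hoffman AsymN AcolN hd _ (w := wN)) => //.
    move=> y; have := ray y; rewrite bfBM bfNM -DE => /andP[h _]; lra.
  by rewrite mulmxN hwN -scaleNr opprB.
have Adiag : forall i, A i i = 0 by move=> i; rewrite /A /adjM mxE eqxx.
have [i [j hij]] : exists i j, A i j != 0.
  case: (pickP (fun p : 'I_n * 'I_n => A p.1 p.2 != 0)) => [[i j] h|h].
    by exists i, j.
  case/eqP: HA; apply/matrixP => i j; rewrite [RHS]mxE.
  by move: (h (i, j)) => /negbFE/eqP.
have ij : i != j by apply: contra hij => /eqP ->; rewrite Adiag.
have Dii : forall u, D u u = dd u by move=> u; rewrite DE !mxE eqxx mulr1n.
have Dij : D i j = 0 by rewrite DE !mxE (negbTE ij) mulr0n.
have a2 : 0 < A i j ^+ 2 by rewrite lt0r sqr_ge0 andbT sqrf_eq0.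
have hi := hd i; have hj := hd j.
have T : forall s, bf A (delta_mx 0 i + s *: delta_mx 0 j) (delta_mx 0 i + s *: delta_mx 0 j) = 2%:R * s * A i j /\
   bf D (delta_mx 0 i + s *: delta_mx 0 j) (delta_mx 0 i + s *: delta_mx 0 j) = dd i + s ^+ 2 * dd j.
  move=> s; rewrite !test_vec // !Adiag Dij !Dii; split; ring.
have lt1 : l1 < 1.
  have [TA TD] := T (A i j); have := ray (delta_mx 0 i + A i j *: delta_mx 0 j).
  rewrite bfBM TA TD => /andP[h _].
  have p0 : 0 < dd i + A i j ^+ 2 * dd j by rewrite ltr_pwDr // mulr_gt0.
  rewrite expr2 in a2 p0; nra.
have gt1 : 1 < lN.
  have [TA TD] := T (- A i j); have := ray (delta_mx 0 i + (- A i j) *: delta_mx 0 j).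
  rewrite bfBM TA TD => /andP[_ h].
  have p0 : 0 < dd i + (- A i j) ^+ 2 * dd j by rewrite ltr_pwDr // mulr_gt0 // sqrrN.
  rewrite sqrrN expr2 in p0; rewrite expr2 in a2; nra.
split; first by rewrite lt1 gt1.
rewrite minEle; have [h|h] := leP (lN - 1) (1 - l1).
  rewrite ler_pdivrMr ?subr_gt0 //; nra.
rewrite ler_pdivrMr ?subr_gt0 //; nra.
Qed.
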